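(* Let $n\in\mathbb{N}$, $k\geq2$, $u\equiv a_{i_1}a_{i_2}\cdots a_{i_k}$ and $x$ with $x,a_{i_j}\in\{a_1,\dots,a_n\}$, and let $S=sgp^+\langle a_1,\dots,a_n\mid u=x\rangle$, where $\{u=x\}$ is a Gröbner–Shirshov basis. Then $S$ is prefix-automatic.
   Context: $A^*$ is the free monoid (empty word $\varepsilon$), $A^+=A^*\setminus\{\varepsilon\}$. $sgp^+\langle A\mid R\rangle$ is $A^+$ modulo the congruence generated by $R$. Gröbner–Shirshov bases: fix a well-ordering of $A$ and the deg-lex ordering on $A^*$ (length, then lexicographic). For monic polynomials $f,g$ in the free associative algebra $F\langle A\rangle$ over a field with leading words $\bar f,\bar g$: if $w\equiv\bar f b\equiv a\bar g$ with $|\bar f|+|\bar g|>|w|$, $(f,g)_w=fb-ag$; if $w\equiv\bar f\equiv a\bar g b$, $(f,g)_w=f-agb$; trivial modulo $(R,w)$ if it equals $\sum\alpha_i a_i s_i b_i$ with $s_i\in R$, $a_i\bar{s_i}b_i<w$. $R$ is a Gröbner–Shirshov basis if all compositions are trivial; $\{u=x\}$ is one if $\{u-x\}$ is. Automaticity: regular = accepted by a finite automaton. With $\$\notin A$, $A(2,\$)=(A\cup\{\$\})^2\setminus\{(\$,\$)\}$; $(\alpha,\beta)\delta_A^R$ is the word over $A(2,\$)$ obtained by padding the shorter word on the right with $\$$'s and reading letter pairs. For $S$ generated by finite $A$, $\phi:A^+\to S$ canonical, $L\subseteq A^+$ regular with $\phi(L)=S$, write $\alpha=\beta$ if $\phi(\alpha)=\phi(\beta)$,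 and $L_a^\$=\{(\alpha,\beta)\delta^R_A:\alpha,\beta\in L,\alpha a=\beta\}$ for $a\in A\cup\{\varepsilon\}$. $(A,L)$ is an automatic structure if all $L_a^\$$ are regular; $S$ is prefix-automatic if it has an automatic structure $(A,L)$ (for some finite generating set) such that $\{(\alpha,\beta)\delta_A^R:\alpha\in L,\beta\in\mathrm{Pref}(L),\alpha=\beta\}$ is regular, $\mathrm{Pref}(L)$ being the set of prefixes of words of $L$. *)

(* Defs.v *)
From HB Require Import structures.
From mathcomp Require Import all_boot all_order all_algebra.
Set Implicit Arguments. Unset Strict Implicit. Unset Printing Implicit Defensive.
Import GRing.Theory.

(* [cong R] is the congruence on A^* generated by R; S = A^+ / cong R. *)
Inductive cong (A : eqType) (R : seq (seq A * seq A)) : seq A -> seq A -> Prop :=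
| cong_step p q l r : (l, r) \in R -> cong R (p ++ l ++ q) (p ++ r ++ q)
| cong_refl w : cong R w w
| cong_sym w1 w2 : cong R w1 w2 -> cong R w2 w1
| cong_trans w1 w2 w3 : cong R w1 w2 -> cong R w2 w3 -> cong R w1 w3.

Record dfa (Sigma : finType) := Dfa {
  dfa_state : finType;
  dfa_start : dfa_state;
  dfa_accept : pred dfa_state;
  dfa_trans : dfa_state -> Sigma -> dfa_state }.

Definition dfa_accepts (Sigma : finType) (M : dfa Sigma) (w : seq Sigma) : bool :=
  @dfa_accept _ M (foldl (@dfa_trans _ M) (@dfa_start _ M) w).

Definition regular (Sigma : finType) (L : seq Sigma -> Prop) : Prop :=
  exists M : dfa Sigma, forall w, L w <-> dfa_accepts M w.

(* Padded alphabet A(2,$) = (A u {$})^2 \ {($,$)}, with $ = None,       *)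
Definition pad_alph (B : finType) : finType :=
  {p : option B * option B | p != (None, None)}.

Definition padconv (B : finType) (alpha beta : seq B) : seq (pad_alph B) :=
  pmap insub
    (zip (map Some alpha ++ nseq (size beta - size alpha) None)
         (map Some beta ++ nseq (size alpha - size beta) None)).

(* A finite generating set of S is a finite type B together with an    *)
(* injective map of B into S (given by representative words gen b);    *)
(* phi : B^+ -> S is then represented by concatenation of the          *)
(* representatives, and alpha = beta in S means cong R.                *)
Section Automatic.
Variables (A : finType) (R : seq (seq A * seq A)).

Definition phiw (B : finType) (gen : B -> seq A) (alpha : seq B) : seq A :=
  flatten (map gen alpha).

Definition is_fin_gen_set (B : finType) (gen : B -> seq A) : Prop :=
  [/\ forall b, gen b != [::],
      forall b1 b2, cong R (gen b1) (gen b2) -> b1 = b2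
    & forall w, w != [::] ->
        exists beta : seq B, beta != [::] /\ cong R (phiw gen beta) w].

(* L_a^$ for a in B u {epsilon} (epsilon = None) *)
Definition Lpad (B : finType) (gen : B -> seq A) (L : seq B -> Prop)
    (a : option B) (w : seq (pad_alph B)) : Prop :=
  exists alpha beta, [/\ L alpha, L beta,
    cong R (phiw gen (alpha ++ oapp (fun c => [:: c]) [::] a)) (phiw gen beta)
    & w = padconv alpha beta].

Definition automatic_structure (B : finType) (gen : B -> seq A)
    (L : seq B -> Prop) : Prop :=
  [/\ forall alpha, L alpha -> alpha != [::],
      regular L,
      forall w, w != [::] -> exists alpha, L alpha /\ cong R (phiw gen alpha) w
    & forall a : option B, regular (Lpad gen L a)].

Definition prefix_closure_lang (B : finType) (gen : B -> seq A)
    (L : seq B -> Prop) (w : seq (pad_alph B)) : Prop :=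
  exists alpha beta, [/\ L alpha, (exists gamma, L (beta ++ gamma)),
    cong R (phiw gen alpha) (phiw gen beta) & w = padconv alpha beta].

Definition prefix_automatic : Prop :=
  exists (B : finType) (gen : B -> seq A) (L : seq B -> Prop),
    [/\ is_fin_gen_set gen, automatic_structure gen L
      & regular (prefix_closure_lang gen L)].

End Automatic.

(* Groebner-Shirshov bases over alphabet 'I_n (letters ordered by      *)
(* their index), deg-lex order on words, coefficients in a field F.     *)
(* Polynomials of F<A> are represented as formal lists of terms        *)
(* (coefficient, word); two polynomials are equal iff all their         *)
(* coefficients [coefw] agree.                                          *)
Fixpoint lexlt (n : nat) (s t : seq 'I_n) : bool :=
  match s, t with
  | [::], _ :: _ => true
  | a :: s', b :: t' => (val a < val b) || ((a == b) && lexlt s' t')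
  | _, _ => false
  end.

Definition deglt (n : nat) (s t : seq 'I_n) : bool :=
  (size s < size t) || ((size s == size t) && lexlt s t).

Section GSB.
Local Open Scope ring_scope.
Variables (F : fieldType) (n : nat).

Definition polyw := seq (F * seq 'I_n).

Definition coefw (p : polyw) (w : seq 'I_n) : F :=
  \sum_(t <- p | t.2 == w) t.1.

Definition relpoly (s : seq 'I_n * seq 'I_n) : polyw := [:: (1, s.1); (-1, s.2)].

Definition mulw (a : seq 'I_n) (p : polyw) (b : seq 'I_n) : polyw :=
  map (fun t => (t.1, a ++ t.2 ++ b)) p.

Definition scalew (c : F) (p : polyw) : polyw := map (fun t => (c * t.1, t.2)) p.

Definition subw (p q : polyw) : polyw := p ++ scalew (-1) q.

Definition trivial_mod (R : seq (seq 'I_n * seq 'I_n)) (h : polyw) (w : seq 'I_n)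
  : Prop :=
  exists T : seq (F * seq 'I_n * (seq 'I_n * seq 'I_n) * seq 'I_n),
    (forall t, t \in T -> t.1.2 \in R /\ deglt (t.1.1.2 ++ t.1.2.1 ++ t.2) w) /\
    forall v, coefw h v =
      coefw (flatten [seq scalew t.1.1.1 (mulw t.1.1.2 (relpoly t.1.2) t.2) | t <- T]) v.

Definition GSbasis (R : seq (seq 'I_n * seq 'I_n)) : Prop :=
  [/\ forall s, s \in R -> deglt s.2 s.1,
      forall f g a b, f \in R -> g \in R -> f.1 ++ b = a ++ g.1 ->
        (size (f.1 ++ b) < size f.1 + size g.1)%N ->
        trivial_mod R (subw (mulw [::] (relpoly f) b) (mulw a (relpoly g) [::]))
                      (f.1 ++ b)
    &
      forall f g a b, f \in R -> g \in R -> f.1 = a ++ g.1 ++ b ->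
        trivial_mod R (subw (relpoly f) (mulw a (relpoly g) b)) f.1].

End GSB.

(* Main.v *)
Require Import Defs.
From mathcomp Require Import all_boot all_order all_algebra zify.
Set Implicit Arguments. Unset Strict Implicit. Unset Printing Implicit Defensive.

Section Reg.
Variable S : finType.

Lemma regular_ext (L1 L2 : seq S -> Prop) :
  (forall w, L1 w <-> L2 w) -> regular L1 -> regular L2.
Proof. move=> H [M HM]; exists M => w; split => [/H/HM|/HM/H] //. Qed.

Lemma regular_and (L1 L2 : seq S -> Prop) :
  regular L1 -> regular L2 -> regular (fun w => L1 w /\ L2 w).
Proof.
move=> [M1 H1] [M2 H2].
pose M := @Dfa S ((dfa_state M1) * (dfa_state M2))%type (@dfa_start _ M1, @dfa_start _ M2)
  (fun q => dfa_accept q.1 && dfa_accept q.2)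
  (fun q c => (dfa_trans q.1 c, dfa_trans q.2 c)).
exists M => w.
have E : forall q1 q2, foldl (@dfa_trans _ M) (q1, q2) w =
   (foldl (@dfa_trans _ M1) q1 w, foldl (@dfa_trans _ M2) q2 w).
  by elim: w => //= c w IH q1 q2; rewrite IH.
rewrite /dfa_accepts E /=.
move: (H1 w) (H2 w); rewrite /dfa_accepts.
case: (@dfa_accept _ M1 _); case: (@dfa_accept _ M2 _); intuition.
Qed.

Lemma regular_not (L : seq S -> Prop) : regular L -> regular (fun w => ~ L w).
Proof.
move=> [M H].
exists (@Dfa S (dfa_state M) (@dfa_start _ M) (fun q => ~~ dfa_accept q) (@dfa_trans _ M)) => w.
move: (H w); rewrite /dfa_accepts /=.
case: (@dfa_accept _ M _) => [[_ h]|[h _]] //=; split => //; [by move=> /(_ (h isT))| move=> _ /h].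
by []. Qed.

Lemma regular_or (L1 L2 : seq S -> Prop) :
  regular L1 -> regular L2 -> regular (fun w => L1 w \/ L2 w).
Proof.
move=> H1 H2.
have := regular_not (regular_and (regular_not H1) (regular_not H2)).
apply: regular_ext => w.
case: H1 H2 => [M1 E1] [M2 E2].
have := E1 w; have := E2 w.
case: (dfa_accepts M1 w); case: (dfa_accepts M2 w); intuition.
Qed.

Fixpoint nacc (Q : finType) (tr : Q -> S -> Q -> bool) (acc : pred Q) (q : Q) (w : seq S) : bool :=
  if w is c :: w' then [exists q', tr q c q' && nacc tr acc q' w'] else acc q.

Lemma regular_nfa (Q : finType) tr acc (s : Q) (L : seq S -> Prop) :
  (forall w, L w <-> nacc tr acc s w) -> regular L.
Proof.
move=> H.
pose M := @Dfa S {set Q} [set s] (fun A => [exists q in A, acc q])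
  (fun A c => [set q' | [exists q in A, tr q c q']]).
exists M => w; apply: iff_trans (H w) _.
suff E : forall A, @dfa_accept _ M (foldl (@dfa_trans _ M) A w) = [exists q in A, nacc tr acc q w].
  rewrite /dfa_accepts E; split=> [h|/existsP[q /andP[]]]; last by rewrite inE => /eqP->.
  by apply/existsP; exists s; rewrite inE eqxx h.
elim: w => [|c w IH] A //.
have -> : foldl (@dfa_trans _ M) A (c :: w) = foldl (@dfa_trans _ M) (@dfa_trans _ M A c) w by [].
rewrite IH /=; apply/existsP/existsP => [[q' /andP[]]|[q /andP[qA /existsP[q' /andP[t h]]]]].
  rewrite inE => /existsP[q /andP[qA t]] h.
  by exists q; rewrite qA /=; apply/existsP; exists q'; rewrite t h.
by exists q'; rewrite h andbT inE; apply/existsP; exists q; rewrite qA t.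
Qed.

End Reg.

Lemma regular_pmap (S S' : finType) (h : S -> option S') (L : seq S' -> Prop) :
  regular L -> regular (fun w => L (pmap h w)).
Proof.
move=> [M H].
exists (@Dfa S (dfa_state M) (@dfa_start _ M) (@dfa_accept _ M)
   (fun q c => if h c is Some c' then dfa_trans q c' else q)) => w.
apply: iff_trans (H _) _; rewrite /dfa_accepts /=.
suff -> : forall q, foldl (@dfa_trans _ M) q (pmap h w) =
  foldl (fun q c => if h c is Some c' then dfa_trans q c' else q) q w by [].
by elim: w => //= c w IH q; case: (h c) => [c'|] /=; rewrite IH.
Qed.

Section Reg2.
Variable S : finType.

Lemma regular_all (P : pred S) : regular (fun w => all P w).
Proof.
exists (@Dfa S bool true id (fun b c => b && P c)) => w.
rewrite /dfa_accepts /=.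
suff -> : forall b, foldl (fun b c => b && P c) b w = b && all P w by [].
by elim: w => //= [b|c w IH b]; [rewrite andbT|rewrite IH andbA].
Qed.

Lemma regular_cat (L1 L2 : seq S -> Prop) : regular L1 -> regular L2 ->
  regular (fun w => exists w1 w2, w = w1 ++ w2 /\ L1 w1 /\ L2 w2).
Proof.
move=> [M1 H1] [M2 H2].
pose Q := (dfa_state M1 + dfa_state M2)%type.
pose tr (q : Q) (c : S) (q' : Q) : bool :=
  match q, q' with
  | inl q, inl q' => q' == dfa_trans q c
  | inl q, inr q' => dfa_accept q && (q' == dfa_trans (@dfa_start _ M2) c)
  | inr q, inr q' => q' == dfa_trans q c
  | inr _, inl _ => false end.
pose acc (q : Q) : bool :=
  match q with inl q => dfa_accept q && dfa_accept (@dfa_start _ M2)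
  | inr q => dfa_accept q end.
have ER : forall w q, nacc tr acc (inr q) w = dfa_accept (foldl (@dfa_trans _ M2) q w).
  elim=> [|c w IH] q //=; apply/existsP/idP => [[[q'|q'] /andP[t h]]|h] //.
  - by move: t => /eqP e; rewrite -IH -e.
  - by exists (inr (dfa_trans q c)); rewrite /= eqxx IH.
have EL : forall w q, nacc tr acc (inl q) w <-> exists w1 w2, w = w1 ++ w2 /\
    dfa_accept (foldl (@dfa_trans _ M1) q w1) /\ dfa_accept (foldl (@dfa_trans _ M2) (@dfa_start _ M2) w2).
  elim=> [|c w IH] q /=.
    split=> [/andP[a b]|[[|? ?] [[|? ?] [//= _ [a b]]]]]; last by rewrite a b.
    by exists [::], [::].
  split.
    move=> /existsP[[q'|q'] /andP[/= t h]].
      move: t h => /eqP-> /IH [w1 [w2 [-> [a b]]]].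
      by exists (c :: w1), w2.
    move: t h => /andP[a /eqP->]; rewrite ER => b.
    by exists [::], (c :: w).
  move=> [[|c' w1] [w2 [/= E [a b]]]].
    apply/existsP; exists (inr (dfa_trans (@dfa_start _ M2) c)).
    rewrite /= a eqxx ER; subst w2; exact: b.
  case: E => Ec E; subst c'; apply/existsP; exists (inl (dfa_trans q c)); rewrite /tr eqxx /=.
  by apply/IH; exists w1, w2.
apply: (@regular_nfa S Q tr acc (inl (@dfa_start _ M1))) => w.
apply: iff_trans (iff_sym (EL _ _)).
split=> [[w1 [w2 [-> [/H1 a /H2 b]]]]|[w1 [w2 [-> [a b]]]]]; exists w1, w2; split=> //.
by split; [apply/H1|apply/H2].
Qed.

Lemma regular_word (v : seq S) : regular (fun w => w = v).
Proof.
pose Q := 'I_(size v).+1.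
pose tr (q : Q) c (q' : Q) := (nth c v q == c) && (q < size v) && (val q' == q.+1).
pose acc (q : Q) := val q == size v.
apply: (@regular_nfa S Q tr acc ord0) => w.
suff E : forall (q : Q) w, nacc tr acc q w = (w == drop q v).
  by rewrite E drop0; split=> [->|/eqP].
move=> {w} q w0; elim: w0 q => [|c w IH] q /=.
  by rewrite /acc; apply/eqP/eqP => [E|/esym/eqP]; [rewrite drop_oversize // E|rewrite -size_eq0 size_drop subn_eq0 => h; apply/eqP; rewrite eqn_leq h -ltnS ltn_ord].
apply/existsP/eqP => [[q' /andP[/andP[/andP[/eqP e l] /eqP e']]]|E].
  rewrite IH e' => /eqP ->.
  by rewrite (drop_nth c l) e.
have l : q < size v by rewrite ltnNge; apply/negP => h; move: E; rewrite drop_oversize.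
exists (Ordinal (l : q.+1 < (size v).+1)); rewrite /tr /= eqxx l IH /=.
by move: E; rewrite (drop_nth c l) => -[Ec Ew]; rewrite -Ec Ew !eqxx.
Qed.

Lemma regular_starword (v : seq S) : v != [::] ->
  regular (fun w => exists m, w = flatten (nseq m v)).
Proof.
move=> vn.
pose Q := 'I_(size v).+1.
pose nx (i : nat) := if i.+1 < size v then i.+1 else 0.
pose tr (q : Q) c (q' : Q) := (nth c v q == c) && (q < size v) && (val q' == nx q).
pose acc (q : Q) := val q == 0.
apply: (@regular_nfa S Q tr acc ord0) => w.
have sv : 0 < size v by rewrite lt0n size_eq0.
suff E : forall (q : Q) w, q < size v -> (nacc tr acc q w <->
   exists m, w = (if val q == 0 then [::] else drop q v) ++ flatten (nseq m v)).
  apply: iff_sym; apply: iff_trans (E ord0 w sv) _.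
  by split; move=> [m ->]; exists m.
move=> {w} q w0; elim: w0 q => [|c w IH] q ql /=.
  rewrite /acc; case: eqP => [_|qn]; first by split=> // _; exists 0.
  split=> // [[m]] /esym /eqP; rewrite -size_eq0 size_cat size_drop.
  by rewrite addn_eq0 subn_eq0 leqNgt ql.
have nxl : nx q < size v by rewrite /nx; case: ifP.
have nxq : nx q < (size v).+1 by apply: ltnW.
have DN : forall i, i < size v -> drop i v = nth c v i :: (if nx i == 0 then [::] else drop (nx i) v).
  move=> i il; rewrite (drop_nth c il); congr cons; rewrite /nx.
  by case: (ltnP i.+1 (size v)) => h //=; rewrite drop_oversize.
have D0 : v = nth c v 0 :: (if nx 0 == 0 then [::] else drop (nx 0) v) by rewrite -DN // drop0.
split.
  move=> /existsP[q' /andP[/andP[/andP[/eqP e _] /eqP e']]].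
  have q'l : q' < size v by rewrite e'.
  have e2 : nat_of_ord q' = nx q := e'.
  move=> /(IH q' q'l) [m Em]; rewrite e2 in Em.
  case: (q =P 0 :> nat) => q0.
    exists m.+1; rewrite /= -e Em q0 -cat_cons; congr (_ ++ _); rewrite ?e' ?e2 ?q0; exact: (esym D0).
  exists m; rewrite /= -e Em (DN q ql) -cat_cons; congr (_ ++ _); by rewrite e'.
move=> [m Em].
apply/existsP; exists (Ordinal nxq); rewrite /tr /= ql eqxx andbT.
have [m' [Ec Ew]] : exists m', c = nth c v q /\ w = (if nx q == 0 then [::] else drop (nx q) v) ++ flatten (nseq m' v).
  case: (q =P 0 :> nat) Em => q0 Em.
    case: m Em => [|m] //= Em.
    move: Em; rewrite q0 /=; rewrite {1}D0 => -[Ec ->].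
    by exists m.
  by move: Em; rewrite (DN q ql) /= => -[Ec ->]; exists m.
rewrite -Ec eqxx /=; apply/(IH (Ordinal nxq) nxl); exists m'; exact: Ew.
Qed.

End Reg2.

Section Phi.
Import GRing.Theory.
Local Open Scope ring_scope.
Variables (F : fieldType) (n : nat) (phi : seq 'I_n -> F).

Definition Phi (p : polyw F n) : F := \sum_(t <- p) t.1 * phi t.2.

Lemma Phi_S (p : polyw F n) (S : seq (seq 'I_n)) : uniq S -> (forall t, t \in p -> t.2 \in S) ->
  Phi p = \sum_(v <- S) coefw p v * phi v.
Proof.
move=> uS HS.
have -> : \sum_(v <- S) coefw p v * phi v =
  \sum_(v <- S) \sum_(t <- p) (if t.2 == v then t.1 * phi t.2 else 0).
  apply: eq_bigr => v _; rewrite /coefw mulr_suml big_mkcond /=.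
  by apply: eq_bigr => t _; case: eqP => [->|]; rewrite ?mul0r.
rewrite exchange_big /Phi big_seq_cond [RHS]big_seq_cond; apply: eq_bigr => t /andP[tp _].
rewrite -big_mkcond /= -big_filter.
have -> : [seq i <- S | t.2 == i] = [seq i <- S | pred1 t.2 i].
  by apply: eq_filter => i; rewrite /= eq_sym.
by rewrite filter_pred1_uniq ?HS // big_seq1.
Qed.

Lemma Phi_coef (p p' : polyw F n) : (forall v, coefw p v = coefw p' v) -> Phi p = Phi p'.
Proof.
move=> H.
pose S := undup (map snd (p ++ p')).
have uS : uniq S := undup_uniq _.
rewrite (@Phi_S p S uS) ?(@Phi_S p' S uS); first by apply: eq_bigr => v _; rewrite H.
- by move=> t tp; rewrite mem_undup map_f // mem_cat tp orbT.
- by move=> t tp; rewrite mem_undup map_f // mem_cat tp.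
Qed.

Lemma Phi_cat p q : Phi (p ++ q) = Phi p + Phi q.
Proof. by rewrite /Phi big_cat. Qed.

Lemma Phi_flatten (ps : seq (polyw F n)) : Phi (flatten ps) = \sum_(p <- ps) Phi p.
Proof. by rewrite /Phi big_flatten. Qed.

Lemma Phi_scale c p : Phi (scalew c p) = c * Phi p.
Proof. by rewrite /Phi big_map mulr_sumr; apply: eq_bigr => t _; rewrite mulrA. Qed.

End Phi.

Lemma cat_eq_case (T : Type) (p0 s0 p1 s1 : seq T) :
  p0 ++ s0 = p1 ++ s1 -> (size p0 <= size p1)%N -> exists m, p1 = p0 ++ m /\ s0 = m ++ s1.
Proof.
elim: p0 p1 => [|c p0 IH] [|d p1] //=.
- by move=> ->; exists [::].
- by move=> E _; exists (d :: p1).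
- move=> [-> E] l; have [m [-> ->]] := IH _ E l; by exists m.
Qed.

Section Rw.
Variables (n : nat) (u : seq 'I_n) (x : 'I_n).
Hypothesis u2 : (1 < size u)%N.

Definition step (v v' : seq 'I_n) := exists p q, v = p ++ u ++ q /\ v' = p ++ x :: q.

Fixpoint red1 (w : seq 'I_n) : option (seq 'I_n) :=
  if take (size u) w == u then Some (x :: drop (size u) w)
  else if w is c :: w' then omap (cons c) (red1 w') else None.

Lemma red1E w : red1 w = if take (size u) w == u then Some (x :: drop (size u) w)
  else if w is c :: w' then omap (cons c) (red1 w') else None.
Proof. by case: w. Qed.

Lemma red1_spec w w' : red1 w = Some w' -> exists p q, [/\ w = p ++ u ++ q, w' = p ++ x :: q &
  forall p1 q1, w = p1 ++ u ++ q1 -> (size p <= size p1)%N].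
Proof.
elim: w w' => [|c w IH] w' /=.
  by case: ifP => // /eqP E; move: u2; rewrite -E.
case: ifP => [/eqP E [<-]|NE].
  exists [::], (drop (size u) (c :: w)); split => //.
  by rewrite -{1}E cat_take_drop.
case E: (red1 w) => [w1|] //= [<-].
have [p [q [E1 E2 H]]] := IH _ E.
exists (c :: p), q; split; [by rewrite E1|by rewrite E2|].
move=> [|d p1] q1 /=.
  by move=> E3; move: NE; rewrite E3 take_size_cat ?eqxx.
by move=> [_ /H].
Qed.

Lemma red1_some p q : red1 (p ++ u ++ q) <> None.
Proof.
elim: p => [|c p IH] /=; first by rewrite red1E take_size_cat ?eqxx.
by case: ifP => //; case: (red1 _) IH.
Qed.

Definition irr w := forall p q, w <> p ++ u ++ q.

Lemma irrE w : irr w <-> red1 w = None.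
Proof.
split.
  move=> H; case E: (red1 w) => [w'|] //.
  by have [p [q [E1 _ _]]] := red1_spec E; case: (H p q).
by move=> E p q E'; apply: (@red1_some p q); rewrite -E'.
Qed.

Lemma red1_size w w' : red1 w = Some w' -> (size w' < size w)%N.
Proof.
move=> /red1_spec [p [q [-> -> _]]].
have := u2; rewrite !size_cat /=; lia.
Qed.

Fixpoint nf_fuel (m : nat) (w : seq 'I_n) : seq 'I_n :=
  if m is m'.+1 then (if red1 w is Some w' then nf_fuel m' w' else w) else w.

Definition nf w := nf_fuel (size w) w.

Lemma nf_fuelE m1 m2 w : (size w <= m1)%N -> (size w <= m2)%N -> nf_fuel m1 w = nf_fuel m2 w.
Proof.
elim: m1 m2 w => [|m1 IH] [|m2] w /=.
- by [].
- rewrite leqn0 size_eq0 => /eqP -> _ /=.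
  by case: ifP => // /eqP E; move: u2; rewrite -E.
- move=> _; rewrite leqn0 size_eq0 => /eqP -> /=.
  by case: ifP => // /eqP E; move: u2; rewrite -E.
- move=> l1 l2; case E: (red1 w) => [w'|] //.
  have := red1_size E => s.
  by apply: IH; rewrite -ltnS; apply: leq_trans s _.
Qed.

Lemma nf_red w w' : red1 w = Some w' -> nf w = nf w'.
Proof.
move=> E; have s := red1_size E.
rewrite /nf; case: (size w) s => [|m] //= s; rewrite E.
by apply: nf_fuelE.
Qed.

Lemma nf_irr0 w : red1 w = None -> nf w = w.
Proof. by rewrite /nf; case: (size w) => //= m ->. Qed.

Lemma nf_irr w : irr (nf w).
Proof.
apply/irrE.
elim: {w}(size w).+1 {-2}w (ltnSn (size w)) => [|N IH] w // l.
case E: (red1 w) => [w'|]; last by rewrite nf_irr0.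
rewrite (nf_red E); apply: IH; rewrite -ltnS; apply: leq_trans l.
by rewrite ltnS; apply: red1_size E.
Qed.

Lemma step_red1 w w' : red1 w = Some w' -> step w w'.
Proof. by move=> /red1_spec [p [q [E1 E2 _]]]; exists p, q. Qed.

Fixpoint num (w : seq 'I_n) : nat := if w is c :: w' then c * n ^ size w' + num w' else 0.

Lemma num_lt w : (num w < n ^ size w)%N.
Proof.
elim: w => [|c w IH] /=; first by rewrite expn0.
rewrite expnS; have cn := ltn_ord c.
apply: leq_trans (_ : c * n ^ size w + n ^ size w <= _)%N; first by rewrite ltn_add2l.
by rewrite addnC -mulSn leq_mul2r cn orbT.
Qed.

Lemma lexlt_num s t : size s = size t -> lexlt s t -> (num s < num t)%N.
Proof.
elim: s t => [|c s IH] [|d t] //= [e] /orP[lt|/andP[/eqP cd l]].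
  apply: leq_trans (_ : c * n ^ size s + n ^ size s <= _)%N; first by rewrite ltn_add2l num_lt.
  by rewrite addnC -mulSn e; apply: leq_trans (leq_addr _ _); rewrite leq_mul2r lt orbT.
by rewrite cd e ltn_add2l; apply: IH.
Qed.

Lemma deglt_ind (P : seq 'I_n -> Prop) :
  (forall w, (forall v, deglt v w -> P v) -> P w) -> forall w, P w.
Proof.
move=> H.
suff: forall N M w, (size w < N)%N -> (num w < M)%N -> P w.
  by move=> /(_ _ _ _ (ltnSn _) (ltnSn _)).
elim=> [|N IHN] // M; elim: M => [|M IHM] // w sN nM.
apply: H => v /orP[sv|/andP[/eqP sv lv]].
  by apply: (IHN (num v).+1) => //; apply: leq_trans sv _.
apply: IHM; first by rewrite sv.
by rewrite -ltnS; apply: leq_trans nM; apply: lexlt_num.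
Qed.

Lemma lexlt_catl (p s t : seq 'I_n) : lexlt (p ++ s) (p ++ t) = lexlt s t.
Proof. by elim: p => //= c p ->; rewrite ltnn eqxx. Qed.

Lemma lexlt_catr (s t q : seq 'I_n) : size s = size t -> lexlt s t -> lexlt (s ++ q) (t ++ q).
Proof.
elim: s t => [|c s IH] [|d t] //= [e] /orP[->//|/andP[cd l]].
by rewrite cd IH // orbT.
Qed.

Lemma deglt_cat (p s t q : seq 'I_n) : deglt s t -> deglt (p ++ s ++ q) (p ++ t ++ q).
Proof.
rewrite /deglt !size_cat => /orP[l|/andP[/eqP e l]].
  by rewrite ltn_add2l ltn_add2r l.
by rewrite e eqxx ltnn /= lexlt_catl lexlt_catr.
Qed.

Lemma deglt_size (s t : seq 'I_n) : (size s < size t)%N -> deglt s t.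
Proof. by rewrite /deglt => ->. Qed.

End Rw.

Section Conf.
Import GRing.Theory.
Variables (F : fieldType) (n : nat) (u : seq 'I_n) (x : 'I_n).
Hypothesis u2 : (1 < size u)%N.
Hypothesis GS : GSbasis F [:: (u, [:: x])].

Lemma good w w' : step u x w w' -> nf u x w' = nf u x w.
Proof.
move: w w'; apply: (@deglt_ind n (fun w => forall w', step u x w w' -> nf u x w' = nf u x w)).
move=> w IH w1 [p1 [q1 [Ew Ew1]]].
case E: (red1 u x w) => [w0|]; last by move: E; rewrite Ew => /red1_some.
have [p0 [q0 [Ew' Ew0 Hmin]]] := red1_spec u2 E.
rewrite (nf_red u2 E).
have l := Hmin p1 q1 Ew.
have Es : p0 ++ (u ++ q0) = p1 ++ (u ++ q1) by rewrite -Ew' -Ew.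
have [m [Ep1 Eq]] := cat_eq_case Es l.
have sw0 : (size w0 < size w)%N by apply: red1_size E.
have sw1 : (size w1 < size w)%N.
  by rewrite Ew Ew1 !size_cat /=; move: u2; lia.
case: (posnP (size m)) => [/eqP|m0].
  rewrite size_eq0 => /eqP m0; subst m.
  have e : q0 = q1 by move: (congr1 (drop (size u)) Eq); rewrite /= !drop_size_cat.
  by rewrite Ew1 Ew0 Ep1 cats0 e.
case: (leqP (size u) (size m)) => um.
  have [m' [Em Eq0]] := cat_eq_case (Eq : u ++ q0 = m ++ (u ++ q1)) um.
  pose w2 := p0 ++ x :: m' ++ x :: q1.
  have s0 : step u x w0 w2.
    by exists (p0 ++ x :: m'), q1; rewrite Ew0 Eq0 /w2 -!catA.
  have s1 : step u x w1 w2.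
    by exists p0, (m' ++ x :: q1); rewrite Ew1 Ep1 Em /w2 -!catA.
  rewrite -(IH _ (deglt_size sw0) _ s0) -(IH _ (deglt_size sw1) _ s1) //.
have [r [Eu Er]] := cat_eq_case (esym Eq : m ++ (u ++ q1) = u ++ q0) (ltnW um).
have lr : (size r <= size u)%N by rewrite Eu size_cat leq_addl.
have [b [Eu' Eq0]] := cat_eq_case (esym Er) lr.
have ov : u ++ b = m ++ u by rewrite {1}Eu -catA -Eu'.
have sb : size b = size m.
  by move: (congr1 size Eu) (congr1 size Eu'); rewrite !size_cat; lia.
have Hsz : (size (u ++ b) < size u + size u)%N by rewrite size_cat ltn_add2l sb.
case: GS => _ Hint _.
have Hm : (u, [:: x]) \in [:: (u, [:: x])] by rewrite mem_seq1.
have [T [HT Hc]] := Hint _ _ m b Hm Hm ov Hsz.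
pose phi v : F := if nf u x (p0 ++ v ++ q1) == nf u x w0 then 1%R else 0%R.
have Ew2 : w = p0 ++ (u ++ b) ++ q1 by rewrite Ew' Eq0 !catA.
have key := Phi_coef phi Hc.
have R0 : Phi phi (flatten [seq scalew t.1.1.1 (mulw t.1.1.2 (relpoly F t.1.2) t.2) | t <- T]) = 0%R.
  rewrite Phi_flatten big_map big_seq big1 // => t tT.
  have [] := HT t tT; rewrite mem_seq1 => /eqP -> /= dl.
  rewrite /Phi !big_cons big_nil /=.
  have -> : phi (t.1.1.2 ++ u ++ t.2) = phi (t.1.1.2 ++ x :: t.2).
    rewrite /phi; congr (if _ then _ else _); congr (_ == _).
    symmetry; apply: IH.
      by rewrite Ew2; apply: deglt_cat.
    by exists (p0 ++ t.1.1.2), (t.2 ++ q1); rewrite -!catA.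
  by rewrite addr0 mulr1 mulrN1 mulNr subrr.
move: key; rewrite R0 /Phi !big_cons big_nil /= cats0 ov.
have -> : phi ([:: x] ++ b) = 1%R by rewrite /phi /= Ew0 Eq0 eqxx.
have -> : phi (m ++ [:: x]) = if nf u x w1 == nf u x w0 then 1%R else 0%R.
  by rewrite /phi Ew1 Ep1 -!catA.
case: eqP => // _.
rewrite mulr0 !addr0 !mul1r !mulr1 mulN1r addrCA subrr addr0.
by move/eqP; rewrite oppr_eq0 oner_eq0.
Qed.

End Conf.


Lemma flatten_nseqS (T : Type) (v : seq T) m : flatten (nseq m.+1 v) = flatten (nseq m v) ++ v.
Proof. by rewrite -addn1 nseqD flatten_cat /= cats0. Qed.

Section NFa.
Variables (n : nat) (u' : seq 'I_n) (z x : 'I_n).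
Let u := rcons u' z.
Hypothesis u'0 : u' != [::].
Hypothesis Hnf : forall w w', step u x w w' -> nf u x w' = nf u x w.

Lemma u2 : (1 < size u)%N.
Proof. by rewrite /u size_rcons ltnS lt0n size_eq0. Qed.

Lemma irr_prefix a s : irr u (a ++ s) -> irr u a.
Proof. by move=> H p q E; apply: (H p (q ++ s)); rewrite E -!catA. Qed.

Lemma irr_dec w : irr u w \/ exists p q, w = p ++ u ++ q.
Proof.
case E: (red1 u x w) => [w'|]; last by left; apply/(irrE x u2).
by right; have [p [q [? _ _]]] := red1_spec u2 E; exists p, q.
Qed.

Lemma nf_irr_id w : irr u w -> nf u x w = w.
Proof. by move=> /(irrE x u2) /nf_irr0. Qed.

Lemma irr_rcons a c : irr u a -> ~ irr u (rcons a c) -> exists a1, a = a1 ++ u' /\ c = z.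
Proof.
move=> ia ni; case: (irr_dec (rcons a c)) => // -[p [q E]].
case/lastP: q E => [|q d] E.
  move: E; rewrite cats0 /u -rcons_cat => /eqP; rewrite eqseq_rcons => /andP[/eqP -> /eqP ->].
  by exists p.
by move: E; rewrite -rcons_cat -rcons_cat catA => /eqP; rewrite eqseq_rcons => /andP[/eqP E _]; case: (ia p q); rewrite E -catA.
Qed.

Definition Tail (s : seq 'I_n) := if x == z then exists m, s = flatten (nseq m.+1 u') else s = u'.
Definition NFa a (al be : seq 'I_n) :=
  be = rcons al a \/ (a = z /\ exists g s, [/\ al = g ++ s, be = rcons g x & Tail s]).

Lemma nf_pow g m : x = z -> nf u x (rcons (g ++ flatten (nseq m u')) z) = nf u x (rcons g z).
Proof.
move=> xz; elim: m => [|m IH]; first by rewrite cats0.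
rewrite -IH flatten_nseqS catA; symmetry; apply: Hnf.
exists (g ++ flatten (nseq m u')), [::]; split; first by rewrite cats0 /u rcons_cat.
by rewrite xz cats1.
Qed.

Lemma nfa_char a al be : irr u al -> irr u be -> (nf u x (rcons al a) = be <-> NFa a al be).
Proof.
move=> ial ibe; split.
  elim: {al}(size al).+1 {-2}al (ltnSn (size al)) a ial be ibe => [|N IH] al // sN a ial be ibe.
  case: (irr_dec (rcons al a)) => [ir|nir].
    by rewrite nf_irr_id // => <-; left.
  have nir' : ~ irr u (rcons al a) by move=> h; case: nir => p [q E]; apply: (h p q).
  have [a1 [Eal Ea]] := irr_rcons ial nir'.
  have ia1 : irr u a1 by apply: (@irr_prefix a1 u'); rewrite -Eal.
  have -> : nf u x (rcons al a) = nf u x (rcons a1 x).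
    symmetry; apply: Hnf; exists a1, [::]; rewrite Eal Ea /u cats0 rcons_cat cats1; split => //.
  move=> E; right; split => //.
  case: (eqVneq x z) => xz.
    have sa1 : (size a1 < N)%N.
      have su : (0 < size u')%N by rewrite lt0n size_eq0.
      by move: sN; rewrite Eal size_cat ltnS; lia.
    case: (IH a1 sa1 x ia1 be ibe E) => [-> | [_ [g [s [E1 E2 Ts]]]]].
      by exists a1, u'; split => //; rewrite /Tail xz eqxx; exists 0; rewrite /= cats0.
    exists g, (s ++ u'); rewrite Eal E1 catA; split => //.
    move: Ts; rewrite /Tail xz eqxx => -[m ->]; exists m.+1.
    by rewrite (flatten_nseqS _ m.+1).
  exists a1, u'; split => //; last by rewrite /Tail (negbTE xz).
  rewrite -E nf_irr_id //.
  case: (irr_dec (rcons a1 x)) => // -[p [q Eq]].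
  have h : ~ irr u (rcons a1 x) by move=> h; apply: (h p q).
  have [? [_ ex]] := irr_rcons ia1 h.
  by move: xz; rewrite ex eqxx.
case => [E|[-> [g [s [-> E Ts]]]]]; first by rewrite E; apply: nf_irr_id; rewrite -E.
rewrite -(nf_irr_id ibe) E.
move: Ts; rewrite /Tail; case: (eqVneq x z) => [xz [m ->]| xz ->].
  by rewrite nf_pow // xz.
symmetry; apply: Hnf; exists g, [::]; split; [by rewrite cats0 /u rcons_cat | by rewrite cats1].
Qed.

End NFa.

Section Pad.
Variable B : finType.

Fixpoint zp (al be : seq B) : seq (option B * option B) :=
  match al with
  | c :: al' => match be with
                | d :: be' => (Some c, Some d) :: zp al' be'
                | [::] => (Some c, None) :: zp al' [::] end
  | [::] => map (fun d => (None, Some d)) be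
  end.

Lemma zp_nil_l be : zp [::] be = map (fun d => (None, Some d)) be.
Proof. by []. Qed.

Lemma zp_nil_r al : zp al [::] = map (fun c => (Some c, None)) al.
Proof. by elim: al => //= c al ->. Qed.

Lemma zpE al be : zip (map Some al ++ nseq (size be - size al) None)
         (map Some be ++ nseq (size al - size be) None) = zp al be.
Proof.
elim: al be => [|c al IH] [|d be] //=.
- by rewrite cats0; congr cons; elim: be => //= d' be ->.
- by rewrite cats0 zp_nil_r; congr cons; elim: al {IH} => //= c' al ->.
- by rewrite !subSS IH.
Qed.

Lemma zp_ok al be : all (fun p => p != (None, None)) (zp al be).
Proof.
elim: al be => [|c al IH] [|d be] //=; rewrite ?IH //.
by elim: be => //= d' be ->.
Qed.

Lemma padconvE al be : map val (padconv al be) = zp al be.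
Proof.
rewrite /padconv zpE (pmap_filter (@insubK _ _ _)).
apply/all_filterP; have := zp_ok al be; apply: sub_all => p.
by rewrite /= isSome_insub.
Qed.

Lemma padconv_eq (w : seq (pad_alph B)) al be : w = padconv al be <-> map val w = zp al be.
Proof.
split=> [->|E]; first exact: padconvE.
by apply: (inj_map val_inj); rewrite E padconvE.
Qed.

Lemma zp_fst al be : pmap fst (zp al be) = al.
Proof.
elim: al be => [|c al IH] [|d be] //=; rewrite ?IH //.
by elim: be => //= d' be ->.
Qed.

Lemma zp_snd al be : pmap snd (zp al be) = be.
Proof.
elim: al be => [|c al IH] [|d be] //=; rewrite ?IH //.
by elim: be => //= d' be [->].
Qed.

Lemma zp_cat a1 a2 b1 b2 : size a1 = size b1 -> zp (a1 ++ a2) (b1 ++ b2) = zp a1 b1 ++ zp a2 b2.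
Proof. by elim: a1 b1 => [|c a1 IH] [|d b1] //= [/IH ->]. Qed.

Definition dg (p : option B * option B) := (p.1 == p.2) && (p.1 != None).

Lemma zp_diag g : zp g g = map (fun c => (Some c, Some c)) g.
Proof. by elim: g => //= c g ->. Qed.

Lemma all_dg_zp g : all dg (zp g g).
Proof. by rewrite zp_diag; elim: g => //= c g ->; rewrite /dg /= eqxx. Qed.

Lemma all_dg w : all dg w -> w = zp (pmap fst w) (pmap fst w).
Proof.
elim: w => //= -[[c|] [d|]] w IH //=; rewrite /dg /= => /andP[/andP[/eqP [<-] _] /IH {1}->] //.
Qed.

Lemma pmap_val (T : Type) (P : pred T) (sT : subType P) (w : seq sT) :
  pmap (fun p => Some (val p)) w = map val w.
Proof. by elim: w => //= p w ->. Qed.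

End Pad.

Section Main.
Variables (F : fieldType) (n : nat) (u' : seq 'I_n) (z x : 'I_n).
Hypothesis u'0 : u' != [::].
Let u := rcons u' z.
Let R := [:: (u, [:: x])].
Hypothesis GS : GSbasis F R.

Let uu2 : (1 < size u)%N := u2 z u'0.
Let Hnf : forall w w', step u x w w' -> nf u x w' = nf u x w := good uu2 GS.

Lemma step_cong w w' : step u x w w' -> cong R w w'.
Proof. by move=> [p [q [-> ->]]]; apply: (@cong_step _ R p q u [:: x]); rewrite mem_seq1. Qed.

Lemma nf_cong w : cong R w (nf u x w).
Proof.
elim: {w}(size w).+1 {-2}w (ltnSn (size w)) => [|N IH] w // l.
case E: (red1 u x w) => [w'|]; last by rewrite nf_irr0 //; apply: cong_refl.
rewrite (nf_red uu2 E); apply: (cong_trans (step_cong (step_red1 uu2 E))); apply: IH.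
by rewrite -ltnS; apply: leq_trans l; rewrite ltnS; apply: (red1_size uu2 E).
Qed.

Lemma cong_nf w1 w2 : cong R w1 w2 -> nf u x w1 = nf u x w2.
Proof.
elim=> [p q l r|w3|w3 w4 _ ->|w3 w4 w5 _ -> _ ->] //.
rewrite mem_seq1 => /eqP [-> ->]; symmetry; apply: Hnf; by exists p, q.
Qed.

Lemma irr_cong a b : irr u a -> irr u b -> cong R a b -> a = b.
Proof. by move=> ia ib /cong_nf; rewrite !nf_irr_id. Qed.

Definition Lirr (w : seq 'I_n) := w != [::] /\ irr u w.

Lemma irr_ex w : irr u w <-> ~ exists p q, w = p ++ u ++ q.
Proof.
split=> [H [p [q E]]|H p q E]; first exact: (H p q E).
by apply: H; exists p, q.
Qed.

Lemma Lirr_reg : regular Lirr.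
Proof.
have r1 : regular (fun w : seq 'I_n => exists p q, w = p ++ u ++ q).
  have := regular_cat (regular_all (@predT 'I_n))
           (regular_cat (regular_word u) (regular_all (@predT 'I_n))).
  apply: regular_ext => w; split.
    move=> [p [w2 [-> [_ [w3 [q [-> [-> _]]]]]]]]; by exists p, q.
  move=> [p [q ->]]; exists p, (u ++ q); split => //; split; first exact: all_predT.
  by exists u, q; split => //; split => //; apply: all_predT.
have := regular_and (regular_not (regular_word (@nil 'I_n))) (regular_not r1).
apply: regular_ext => w; rewrite /Lirr; split.
  by move=> [a b]; split; [apply/eqP|apply/irr_ex].
by move=> [/eqP a /irr_ex b].
Qed.

Definition gen (c : 'I_n) : seq 'I_n := [:: c].

Lemma phiw_id w : phiw gen w = w.
Proof. exact: flatten_seq1. Qed.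

Lemma irr1 c : irr u [:: c].
Proof.
move=> p q E; move: (congr1 size E); rewrite /= !size_cat.
by move: uu2; lia.
Qed.

Lemma nf_nonnil w : w != [::] -> nf u x w != [::].
Proof.
elim: {w}(size w).+1 {-2}w (ltnSn (size w)) => [|N IH] w // l wn.
case E: (red1 u x w) => [w'|]; last by rewrite nf_irr0.
rewrite (nf_red uu2 E); apply: IH.
  by rewrite -ltnS; apply: leq_trans l; rewrite ltnS; apply: (red1_size uu2 E).
by have [p [q [_ -> _]]] := red1_spec uu2 E; case: p.
Qed.

Lemma fin_gen : is_fin_gen_set R gen.
Proof.
split => // [b1 b2 /irr_cong|w wn].
  by move=> /(_ (@irr1 b1) (@irr1 b2)) [].
by exists w; rewrite phiw_id; split => //; apply: cong_refl.
Qed.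

Definition ltr (c : 'I_n) : option 'I_n * option 'I_n := (Some c, None).
Definition Tl (ws : seq (option 'I_n * option 'I_n)) :=
  if x == z then exists m, ws = flatten (nseq m (map ltr u')) else ws = [::].
Definition hd3 := (Some (head x u'), Some x) :: map ltr (behead u').
Definition C1 a (ws : seq (option 'I_n * option 'I_n)) :=
  exists w1 w2, ws = w1 ++ w2 /\ all (@dg _) w1 /\ w2 = [:: (None, Some a)].
Definition C23 (ws : seq (option 'I_n * option 'I_n)) :=
  exists w1 w2, ws = w1 ++ w2 /\ all (@dg _) w1 /\
    exists w3 w4, w2 = w3 ++ w4 /\ w3 = hd3 /\ Tl w4.
Definition Struct a ws := C1 a ws \/ (a = z /\ C23 ws).

Lemma Struct_reg a : regular (Struct a).
Proof.
have rC1 : regular (C1 a) := regular_cat (regular_all _) (regular_word _).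
have rTl : regular Tl.
  rewrite /Tl; case: (x == z); last exact: regular_word.
  apply: regular_starword; move: u'0; by case: u'.
have rC23 : regular C23 := regular_cat (regular_all _) (regular_cat (regular_word _) rTl).
case: (eqVneq a z) => az.
  by apply: regular_ext (regular_or rC1 rC23) => w; rewrite /Struct; intuition.
by apply: regular_ext rC1 => w; split => [h|[//|[e]]]; [left|move: az; rewrite e eqxx].
Qed.

Lemma zp_rcons (g : seq 'I_n) a : zp g (rcons g a) = zp g g ++ [:: (None, Some a)].
Proof. by rewrite -cats1 -{1}(cats0 g) zp_cat. Qed.

Lemma zp_hd3 t : zp (u' ++ t) [:: x] = hd3 ++ map ltr t.
Proof.
have u'E : u' = head x u' :: behead u' by move: u'0; case: u'.
by rewrite {1}u'E /= zp_nil_r /hd3 map_cat.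
Qed.

Lemma zp_gx (g s : seq 'I_n) : zp (g ++ s) (rcons g x) = zp g g ++ zp s [:: x].
Proof. by rewrite -cats1 zp_cat. Qed.

Lemma Struct_char a ws : (exists al be, ws = zp al be /\ NFa u' z x a al be) <-> Struct a ws.
Proof.
have u'E : u' = head x u' :: behead u' by move: u'0; case: u'.
split.
  move=> [al [be [-> [->|[az [g [s [-> -> Ts]]]]]]]].
    left; exists (zp al al), [:: (None, Some a)]; split; last by split => //; apply: all_dg_zp.
    by rewrite zp_rcons.
  right; split => //; exists (zp g g), (zp s [:: x]); split.
    by rewrite -cats1 zp_cat.
  split; first exact: all_dg_zp.
  move: Ts; rewrite /Tail /Tl; case: (x == z) => [[m ->]|->].
    exists hd3, (flatten (nseq m (map ltr u'))); split => //.
      rewrite /= {1}u'E /= zp_nil_r /hd3 map_cat; congr (_ :: _ ++ _).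
      by rewrite map_flatten map_nseq.
    by split => //; exists m.
  exists hd3, [::]; split => //; last by rewrite cats0 {1}u'E /= zp_nil_r.
move=> [[w1 [w2 [-> [d1 ->]]]]|[-> [w1 [w2 [-> [d1 [w3 [w4 [-> [-> Tw]]]]]]]]]].
  exists (pmap fst w1), (rcons (pmap fst w1) a); split; last by left.
  by rewrite zp_rcons -(all_dg d1).
move: Tw; rewrite /Tl; case: ifP => xz; [move=> [m ->]|move=> ->].
  exists (pmap fst w1 ++ u' ++ flatten (nseq m u')), (rcons (pmap fst w1) x); split.
    by rewrite zp_gx zp_hd3 -(all_dg d1) map_flatten map_nseq.
  right; split => //; exists (pmap fst w1), (u' ++ flatten (nseq m u')); split => //.
  by rewrite /Tail xz; exists m.
exists (pmap fst w1 ++ u'), (rcons (pmap fst w1) x); split.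
  by rewrite zp_gx -{1}(cats0 u') zp_hd3 -(all_dg d1).
right; split => //; exists (pmap fst w1), u'; split => //.
by rewrite /Tail xz.
Qed.

Definition LangA a (ws : seq (option 'I_n * option 'I_n)) :=
  Lirr (pmap fst ws) /\ (Lirr (pmap snd ws) /\ Struct a ws).

Lemma LangA_reg a : regular (fun w : seq (pad_alph 'I_n) => LangA a (map val w)).
Proof.
have r : regular (LangA a) := regular_and (regular_pmap fst Lirr_reg)
   (regular_and (regular_pmap snd Lirr_reg) (Struct_reg a)).
have := regular_pmap (fun p : pad_alph 'I_n => Some (val p)) r.
by apply: regular_ext => w; rewrite pmap_val.
Qed.

Definition Lang0 (ws : seq (option 'I_n * option 'I_n)) := all (@dg _) ws /\ Lirr (pmap fst ws).

Lemma Lang0_reg : regular (fun w : seq (pad_alph 'I_n) => Lang0 (map val w)).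
Proof.
have r : regular Lang0 := regular_and (regular_all _) (regular_pmap fst Lirr_reg).
have := regular_pmap (fun p : pad_alph 'I_n => Some (val p)) r.
by apply: regular_ext => w; rewrite pmap_val.
Qed.

Lemma Lpad_None w : Lpad R gen Lirr None w <-> Lang0 (map val w).
Proof.
split.
  move=> [al [be [La Lb]]]; rewrite /= cats0 !phiw_id => C /padconv_eq E.
  have eab := irr_cong La.2 Lb.2 C; subst be.
  by rewrite E; split; [apply: all_dg_zp|rewrite zp_fst].
move=> [d L]; exists (pmap fst (map val w)), (pmap fst (map val w)); split => //.
  by rewrite /= cats0; apply: cong_refl.
by apply/padconv_eq; apply: all_dg.
Qed.

Lemma Lpad_Some a w : Lpad R gen Lirr (Some a) w <-> LangA a (map val w).
Proof.
split.
  move=> [al [be [La Lb]]]; rewrite /= !phiw_id cats1 => C /padconv_eq E.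
  have N : nf u x (rcons al a) = be by rewrite (cong_nf C) nf_irr_id //; exact: Lb.2.
  have := (nfa_char u'0 Hnf a La.2 Lb.2).1 N => nfa.
  rewrite E /LangA zp_fst zp_snd; split => //; split => //.
  by apply/Struct_char; exists al, be.
move=> [L1 [L2 /Struct_char [al [be [E nfa]]]]].
move: L1 L2; rewrite E zp_fst zp_snd => L1 L2.
exists al, be; split => //; last by apply/padconv_eq.
rewrite /= !phiw_id cats1.
have N := (nfa_char u'0 Hnf a L1.2 L2.2).2 nfa.
by rewrite -N; apply: nf_cong.
Qed.

Lemma pref_eq w : prefix_closure_lang R gen Lirr w <-> Lang0 (map val w).
Proof.
split.
  move=> [al [be [La [g Lg] C /padconv_eq E]]].
  rewrite !phiw_id in C.
  have ib : irr u be by apply: (@irr_prefix _ _ z be g); exact: Lg.2.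
  have eab := irr_cong La.2 ib C; subst be.
  by rewrite E; split; [apply: all_dg_zp|rewrite zp_fst].
move=> [d L]; exists (pmap fst (map val w)), (pmap fst (map val w)); split => //.
- by exists [::]; rewrite cats0.
- by rewrite phiw_id; apply: cong_refl.
- by apply/padconv_eq; apply: all_dg.
Qed.

Lemma main_pa : prefix_automatic R.
Proof.
exists 'I_n, gen, Lirr; split.
- exact: fin_gen.
- split.
  + by move=> al [].
  + exact: Lirr_reg.
  + move=> w wn; exists (nf u x w); split; first by split; [apply: nf_nonnil|apply: nf_irr].
    by rewrite phiw_id; apply: cong_sym; apply: nf_cong.
  + case=> [a|].
      by apply: regular_ext (LangA_reg a) => w; split => /Lpad_Some.
    by apply: regular_ext Lang0_reg => w; split => /Lpad_None.
- by apply: regular_ext Lang0_reg => w; split => /pref_eq.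
Qed.

End Main.


Theorem theorem3p1p5 (F : fieldType) (n k : nat) (u : seq 'I_n) (x : 'I_n) :
  (2 <= k)%N -> size u = k ->
  GSbasis F [:: (u, [:: x])] ->
  prefix_automatic [:: (u, [:: x])].
Proof.
move=> k2; case/lastP: u => [|u' z] su; first by move: k2; rewrite -su.
have u'0 : u' != [::] by apply/eqP => e; move: k2; rewrite -su e.
move=> GS; exact: (main_pa u'0 GS).
Qed.
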